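(* Let $n\ge1$ and $\nu,\rho\vdash n$. Then \[ LP^n_{\nu,\rho}=\sum_{\lambda,\mu\vdash n}\overline R_{\lambda,\nu}\,\overline R_{\mu,\rho}\,L^n_{\lambda,\mu}, \] where only partitions $\lambda$ refining $\nu$ and $\mu$ refining $\rho$ contribute.
   Context: Work on the set $[n]\cup[\hat n]=\{1,\dots,n,\hat1,\dots,\hat n\}$; permutations are composed right to left, and a pairing is a fixed-point-free involution of this set. Let $f_1=(1\,\hat n)(2\,\hat1)(3\,\hat2)\cdots(n\,\widehat{n-1})$ and $f_2=(1\,\hat1)(2\,\hat2)\cdots(n\,\hat n)$. For a partition $\lambda$, $\lambda\lambda$ denotes the partition with parts $\lambda_1,\lambda_1,\lambda_2,\lambda_2,\dots$ and $\mathcal C_{\lambda\lambda}$ the set of permutations of $[n]\cup[\hat n]$ of cycle type $\lambda\lambda$. $L^n_{\lambda,\mu}$ is the number of pairings $f_3$ with $f_3\circ f_1\in\mathcal C_{\lambda\lambda}$ and $f_3\circ f_2\in\mathcal C_{\mu\mu}$. A set partition of $[n]\cup[\hat n]$ with all blocks of even size has half-type $\lambda$ if its block sizes are $2\lambda_1,2\lambda_2,\dots$; it is stable by a permutation $f$ if $f$ maps each block onto itself. $LP^n_{\lambda,\mu}$ is the number of triples $(f_3,\pi_1,\pi_2)$ where $f_3$ is a pairing, $\pi_1,\pi_2$ are set partitions of $[n]\cup[\hat n]$ with blocks of even size, of half-types $\lambda$ and $\mu$ respectively, $\pi_1$ is stable by $f_1$ and $f_3$, and $\pi_2$ is stable by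 $f_2$ and $f_3$. For partitions $\lambda,\nu\vdash n$, $\overline R_{\lambda,\nu}$ is the number of (unordered) set partitions $\{B_1,\dots,B_{\ell(\nu)}\}$ of $\{1,\dots,\ell(\lambda)\}$ such that the multiset of block sums $\{\sum_{i\in B_j}\lambda_i\}_j$ equals the multiset of parts of $\nu$. *)

(* Defs.v *)
From mathcomp Require Import all_boot all_fingroup.
Set Implicit Arguments. Unset Strict Implicit. Unset Printing Implicit Defensive.

(* Ground set [n] u [^n]: inl i stands for i+1, inr i for hat(i+1) (0-based ordinals). *)
Definition ground (n : nat) : finType := ('I_n + 'I_n)%type.

Definition is_partition (n : nat) (l : seq nat) : bool :=
  [&& sorted geq l, all (fun x => 0 < x) l & sumn l == n].

Fixpoint seqs_upto (k m : nat) : seq (seq nat) :=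
  if k is k'.+1 then
    [::] :: [seq x :: s | x <- iota 1 m, s <- seqs_upto k' m]
  else [:: [::]].

Definition partitions (n : nat) : seq (seq nat) :=
  [seq l <- seqs_upto n n | is_partition n l].

Definition dbl (l : seq nat) : seq nat := flatten [seq [:: x; x] | x <- l].

Definition cycle_type (T : finType) (s : {perm T}) : seq nat :=
  [seq #|C| | C : {set T} <- enum (porbits s)].

Definition in_class (T : finType) (ll : seq nat) (s : {perm T}) : bool :=
  perm_eq (cycle_type s) ll.

Definition is_pairing (T : finType) (f : {perm T}) : bool :=
  [forall x, (f (f x) == x) && (f x != x)].

(* f1 = (1 n^)(2 1^)(3 2^)...(n (n-1)^) *)
Definition f1_fun n (x : ground n) : ground n :=
  match x with inl i => inr (ord_pred i) | inr j => inl (ordS j) end.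
Lemma f1_inj n : injective (@f1_fun n).
Proof.
have K : cancel (@f1_fun n) (@f1_fun n).
  by case=> i /=; rewrite ?ord_predK ?ordSK.
exact: can_inj K.
Qed.
Definition f1 n : {perm ground n} := perm (@f1_inj n).

Definition f2_fun n (x : ground n) : ground n :=
  match x with inl i => inr i | inr j => inl j end.
Lemma f2_inj n : injective (@f2_fun n).
Proof.
have K : cancel (@f2_fun n) (@f2_fun n) by case.
exact: can_inj K.
Qed.
Definition f2 n : {perm ground n} := perm (@f2_inj n).

(* Composition f3 o f1 (apply f1 first) is, in mathcomp's {perm} group, f1 * f3
   since (s * t) x = t (s x). *)
Definition L (n : nat) (lam mu : seq nat) : nat :=
  #|[set f3 : {perm ground n} | [&& is_pairing f3,
       in_class (dbl lam) (f1 n * f3)%g & in_class (dbl mu) (f2 n * f3)%g]]|.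

Definition even_setpart_halftype (T : finType) (lam : seq nat) (P : {set {set T}}) : bool :=
  [&& partition P [set: T], [forall B in P, ~~ odd #|B|] &
      perm_eq [seq #|B| %/ 2 | B : {set T} <- enum P] lam].

Definition stable_by (T : finType) (f : {perm T}) (P : {set {set T}}) : bool :=
  [forall B in P, f @: B == B].

Definition LP (n : nat) (nu rho : seq nat) : nat :=
  #|[set t : {perm ground n} * {set {set ground n}} * {set {set ground n}} |
      let: (f3, p1, p2) := t in
      [&& is_pairing f3,
          even_setpart_halftype nu p1, even_setpart_halftype rho p2,
          stable_by (f1 n) p1, stable_by f3 p1,
          stable_by (f2 n) p2 & stable_by f3 p2]]|.

Definition Rbar (lam nu : seq nat) : nat :=
  #|[set Q : {set {set 'I_(size lam)}} |
      partition Q [set: 'I_(size lam)] &&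
      perm_eq [seq (\sum_(i in B) nth 0 lam i)%N | B : {set 'I_(size lam)} <- enum Q] nu]|.

(* Main.v *)
Require Import Defs.
From mathcomp Require Import all_boot all_fingroup zify.
Set Implicit Arguments. Unset Strict Implicit. Unset Printing Implicit Defensive.

Lemma pairing_inv (T : finType) (s : {perm T}) : is_pairing s -> forall x, s (s x) = x.
Proof. by move/forallP=> H x; case/andP: (H x) => /eqP. Qed.
Lemma pairing_nfix (T : finType) (s : {perm T}) : is_pairing s -> forall x, s x != x.
Proof. by move/forallP=> H x; case/andP: (H x). Qed.

Lemma porbit_sub_closed (T : finType) (s : {perm T}) (B : {set T}) x :
  (forall y, y \in B -> s y \in B) -> x \in B -> porbit s x \subset B.
Proof.
move=> cl xB; apply/subsetP=> y /porbitP[i ->]; elim: i => [|i IH].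
  by rewrite expg0 perm1.
by rewrite expgSr permM; apply: cl.
Qed.

Lemma porbit_eq (T : finType) (s : {perm T}) x y :
  y \in porbit s x -> porbit s y = porbit s x.
Proof. by move=> H; apply/eqP; rewrite eq_porbit_mem. Qed.

Lemma porbit_step (T : finType) (s : {perm T}) x : s x \in porbit s x.
Proof. by apply/porbitP; exists 1; rewrite expg1. Qed.

Definition coarse (T : finType) (A P : {set {set T}}) :=
  [forall a in A, [exists B in P, a \subset B]].

Section Atoms.
Variables (T : finType) (f h : {perm T}).
Hypotheses (Hf : is_pairing f) (Hh : is_pairing h).

Local Notation g := (f * h)%g.

Lemma gE x : g x = h (f x). Proof. by rewrite permM. Qed.

Lemma gfg x : g (f (g x)) = f x.
Proof. by rewrite !gE (pairing_inv Hf) (pairing_inv Hh). Qed.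

Lemma fgV x : f (g x) = (g^-1)%g (f x).
Proof. by apply: (@perm_inj _ g); rewrite gfg permKV. Qed.

Lemma f_porbit x y : y \in porbit g x -> f y \in porbit g (f x).
Proof.
move=> Hy.
have : porbit g x \subset [set z | f z \in porbit g (f x)].
  apply: porbit_sub_closed; last by rewrite inE porbit_id.
  move=> z; rewrite !inE => Hz.
  rewrite fgV.
  have E : porbit g ((g^-1)%g (f z)) = porbit g (f z).
    by rewrite -{2}(permKV g (f z)) -(expg1 g) porbit_perm.
  by rewrite -(porbit_eq Hz) -E porbit_id.
by move/subsetP/(_ y Hy); rewrite inE.
Qed.

Lemma f_notin_porbit x : f x \notin porbit g x.
Proof.
apply/negP=> /porbitP[k Hk].
have key : forall j, j <= k -> f (((g ^+ j)%g) x) = (g ^+ (k - j))%g x.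
  elim=> [|j IH] Hj; first by rewrite expg0 perm1 subn0.
  rewrite expgSr permM fgV IH ?(ltnW Hj) //.
  have -> : k - j = (k - j.+1).+1 by lia.
  by rewrite expgSr permM permK.
have := odd_double_half k; set m := k./2 => Hk2.
have Hm : m <= k by lia.
have := key m Hm.
case: (odd k) Hk2 => /= Hk2.
- have -> : k - m = m.+1 by rewrite -addnn in Hk2; lia.
  rewrite expgSr permM gE => E.
  by move: (pairing_nfix Hh (f ((g ^+ m)%g x))); rewrite -E eqxx.
- have -> : k - m = m by rewrite -addnn in Hk2; lia.
  by move=> E; move: (pairing_nfix Hf ((g ^+ m)%g x)); rewrite E eqxx.
Qed.

Lemma card_porbit_f x : #|porbit g (f x)| = #|porbit g x|.
Proof.
have le : forall y, #|porbit g y| <= #|porbit g (f y)|.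
  move=> y; rewrite -(card_imset _ (@perm_inj _ f)); apply: subset_leq_card.
  by apply/subsetP=> z /imsetP[u Hu ->]; apply: f_porbit.
apply/eqP; rewrite eqn_leq le andbT.
by have := le (f x); rewrite (pairing_inv Hf).
Qed.

Lemma imset_f_porbit x : f @: porbit g x = porbit g (f x).
Proof.
apply/eqP; rewrite eqEcard card_imset ?card_porbit_f ?leqnn ?andbT; last exact: perm_inj.
by apply/subsetP=> z /imsetP[u Hu ->]; apply: f_porbit.
Qed.

Lemma porbit_disj x : [disjoint porbit g x & porbit g (f x)].
Proof.
rewrite -setI_eq0; apply/eqP/setP=> z; rewrite !inE; apply/negbTE/andP=> [[zx zfx]].
move: (f_notin_porbit x); rewrite -(porbit_eq zx) (porbit_eq zfx) porbit_id.
by [].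
Qed.

Definition atom x := porbit g x :|: porbit g (f x).

Lemma atom_id x : x \in atom x. Proof. by rewrite inE porbit_id. Qed.
Lemma atom_f x : f x \in atom x. Proof. by rewrite inE porbit_id orbT. Qed.

Lemma atom_eq x y : y \in atom x -> atom y = atom x.
Proof.
rewrite /atom; case/setUP=> Hy.
  by rewrite (porbit_eq Hy) (porbit_eq (f_porbit Hy)).
have := f_porbit Hy; rewrite (pairing_inv Hf) => Hfy.
by rewrite (porbit_eq Hy) (porbit_eq Hfy) setUC.
Qed.

Lemma card_atom x : #|atom x| = (#|porbit g x|).*2.
Proof.
rewrite /atom cardsU card_porbit_f.
have := porbit_disj x; rewrite -setI_eq0 => /eqP ->.
by rewrite cards0 subn0 addnn.
Qed.

Definition atoms := [set atom x | x : T].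

Lemma partition_atoms : partition atoms [set: T].
Proof.
apply/and3P; split.
- apply/eqP/setP=> x; rewrite inE; apply/bigcupP; exists (atom x).
    exact: imset_f.
  exact: atom_id.
- apply/trivIsetP=> _ _ /imsetP[x _ ->] /imsetP[y _ ->] Hne.
  rewrite -setI_eq0; apply/eqP/setP=> z; rewrite in_setI in_set0; apply/negbTE/andP=> [[zx zy]].
  by move: Hne; rewrite -(atom_eq zx) -(atom_eq zy) eqxx.
- by apply/imsetP=> [[x _ E]]; move: (atom_id x); rewrite -E in_set0.
Qed.

Lemma stable_coarse (P : {set {set T}}) : partition P [set: T] ->
  (stable_by f P && stable_by h P) = coarse atoms P.
Proof.
move=> HP; have cP := cover_partition HP; have tP := partition_trivIset HP.
apply/idP/idP.
- case/andP=> /forallP Sf /forallP Sh.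
  apply/forallP=> a; apply/implyP=> /imsetP[x _ ->].
  have xc : x \in cover P by rewrite cP inE.
  apply/existsP; exists (pblock P x); rewrite pblock_mem //=.
  set B := pblock P x.
  have BP : B \in P by exact: pblock_mem.
  have clf : forall y, y \in B -> f y \in B.
    by move=> y yB; move/implyP/(_ BP)/eqP: (Sf B) => <-; apply: imset_f.
  have clh : forall y, y \in B -> h y \in B.
    by move=> y yB; move/implyP/(_ BP)/eqP: (Sh B) => <-; apply: imset_f.
  have clg : forall y, y \in B -> g y \in B by move=> y yB; rewrite gE; auto.
  have xB : x \in B by rewrite mem_pblock.
  by rewrite subUset !porbit_sub_closed //; apply: clf.
- move/forallP=> H.
  have key : forall B x, B \in P -> x \in B -> atom x \subset B.
    move=> B x BP xB; have Ha : atom x \in atoms by apply: imset_f.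
    move/implyP: (H (atom x)) => /(_ Ha)/existsP[B' /andP[B'P sB']].
    have xB' : x \in B' by apply: (subsetP sB'); apply: atom_id.
    by rewrite -(def_pblock tP BP xB) (def_pblock tP B'P xB').
  have stab : forall s : {perm T}, (forall B x, B \in P -> x \in B -> s x \in B) -> stable_by s P.
    move=> s Hs; apply/forallP=> B; apply/implyP=> BP.
    rewrite eqEcard card_imset ?leqnn ?andbT; last exact: perm_inj.
    by apply/subsetP=> _ /imsetP[x xB ->]; apply: Hs.
  apply/andP; split; apply: stab => B x BP xB.
    by apply: (subsetP (key B x BP xB)); apply: atom_f.
  apply: (subsetP (key B x BP xB)).
  have -> : h x = g (f x) by rewrite gE (pairing_inv Hf).
  by rewrite inE porbit_step orbT.
Qed.

Definition wt (a : {set T}) := #|a| %/ 2.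

Lemma wt_atom x : wt (atom x) = #|porbit g x|.
Proof. by rewrite /wt card_atom -muln2 mulnK. Qed.

Lemma even_atoms a : a \in atoms -> #|a| = (wt a).*2.
Proof. by case/imsetP=> x _ ->; rewrite wt_atom card_atom. Qed.

Lemma wt_pos a : a \in atoms -> 0 < wt a.
Proof. by case/imsetP=> x _ ->; rewrite wt_atom lt0n card_porbit_neq0. Qed.

Lemma count_cycle_type (p : pred nat) :
  count p (cycle_type g) = (count p [seq wt a | a <- enum atoms]).*2.
Proof.
rewrite /cycle_type !count_map -!sum1_count !big_enum_cond /=.
rewrite (partition_big (fun C => C :|: f @: C) (mem atoms)); last first.
  by move=> C /andP[/imsetP[x _ ->] _]; rewrite imset_f_porbit; apply: imset_f.
rewrite -muln2 big_distrl /= [RHS]big_mkcondr /=; apply: eq_bigr => _ /imsetP[x _ ->].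
have Hne : porbit g x != porbit g (f x).
  by apply/eqP=> E; move: (f_notin_porbit x); rewrite E porbit_id.
rewrite (eq_bigl (fun C => (C \in [set porbit g x; porbit g (f x)]) && p #|C|)); last first.
  move=> C; rewrite -andbA [p _ && _]andbC andbA; congr (_ && _); apply/idP/idP.
    case/andP=> /imsetP[y _ ->]; rewrite imset_f_porbit => /eqP E.
    have : y \in atom x by rewrite -[atom x]E /= inE porbit_id.
    by case/setUP=> /porbit_eq ->; rewrite !inE eqxx ?orbT.
  by case/set2P=> ->; rewrite imset_f_porbit imset_f //= ?(pairing_inv Hf) /atom // setUC.
rewrite big_mkcondr /= big_setU1 /=; last by rewrite inE.
rewrite big_set1 card_porbit_f wt_atom.
by case: (p _); rewrite ?muln2.
Qed.

End Atoms.

Lemma perm_enum_imset (aT rT : finType) (F : aT -> rT) (Q : {set aT}) :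
  injective F -> perm_eq (enum (F @: Q)) (map F (enum Q)).
Proof.
move=> Finj; apply: uniq_perm; first exact: enum_uniq.
  by rewrite map_inj_uniq ?enum_uniq.
move=> y; rewrite mem_enum; apply/imsetP/mapP => [[x xQ ->]|[x]].
  by exists x; rewrite ?mem_enum.
by rewrite mem_enum => xQ ->; exists x.
Qed.

Lemma part_nset0 (T : finType) (P : {set {set T}}) D : partition P D -> set0 \notin P.
Proof. by case/and3P. Qed.

Section PartA.
Variables (T : finType) (A : {set {set T}}) (lam : seq nat).
Local Notation k := (size lam).
Variable e : 'I_k -> {set T}.
Hypotheses (HA : partition A [set: T]) (e_inj : injective e)
  (e_mem : forall i, e i \in A) (e_surj : forall a, a \in A -> exists i, a = e i)
  (e_w : forall i, #|e i| = (nth 0 lam i).*2).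

Lemma e_ne0 i : exists x, x \in e i.
Proof.
have : e i != set0.
  by apply/eqP=> E; move: (e_mem i); rewrite E (negbTE (part_nset0 HA)).
by case/set0Pn=> x; exists x.
Qed.

Lemma e_disj i j x : x \in e i -> x \in e j -> i = j.
Proof.
move=> xi xj; apply/eqP; apply/negPn/negP => ne.
have ne' : e i != e j by apply: contra ne => /eqP /e_inj ->.
by move: (trivIsetP (partition_trivIset HA) _ _ (e_mem i) (e_mem j) ne') => /disjointFr/(_ xi); rewrite xj.
Qed.

Lemma e_cover x : exists i, x \in e i.
Proof.
have : x \in cover A by rewrite (cover_partition HA) inE.
by case/bigcupP=> a aA xa; case: (e_surj aA) => i E; exists i; rewrite -E.
Qed.

Definition U (B : {set 'I_k}) : {set T} := \bigcup_(i in B) e i.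
Definition V (C : {set T}) : {set 'I_k} := [set i | e i \subset C].

Lemma VU B : V (U B) = B.
Proof.
apply/setP=> i; rewrite inE; apply/idP/idP; last by move=> iB; apply: bigcup_sup.
case: (e_ne0 i) => x xi /subsetP/(_ x xi)/bigcupP[j jB xj].
by rewrite (e_disj xi xj).
Qed.

Lemma U_inj : injective U. Proof. exact: can_inj VU. Qed.

Lemma cardU B : #|U B| = (\sum_(i in B) nth 0 lam i).*2.
Proof.
have tr : trivIset (e @: B).
  apply: trivIsetS (partition_trivIset HA).
  by apply/subsetP=> _ /imsetP[i _ ->].
rewrite /U -cover_imset -(eqP tr) big_imset /=; last by move=> i j _ _; apply: e_inj.
by rewrite -!muln2 big_distrl; apply: eq_bigr => i _; rewrite e_w -muln2.
Qed.

Lemma halfU (Q : {set {set 'I_k}}) : perm_eq [seq #|X| %/ 2 | X : {set T} <- enum (U @: Q)]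
                        [seq \sum_(i in B) nth 0 lam i | B : {set 'I_k} <- enum Q].
Proof.
apply: perm_trans (perm_map _ (perm_enum_imset Q U_inj)) _.
rewrite -map_comp (@eq_map _ _ _ (fun B : {set 'I_k} => \sum_(i in B) nth 0 lam i)) //.
by move=> B /=; rewrite cardU -muln2 mulnK.
Qed.

Lemma fwd nu (Q : {set {set 'I_k}}) :
  partition Q [set: 'I_k] -> perm_eq [seq \sum_(i in B) nth 0 lam i | B : {set 'I_k} <- enum Q] nu ->
  even_setpart_halftype nu (U @: Q) && coarse A (U @: Q).
Proof.
move=> HQ Hs; have cQ := cover_partition HQ.
have inQ : forall i, exists2 B, B \in Q & i \in B.
  move=> i; have : i \in cover Q by rewrite cQ inE.
  by case/bigcupP=> B BQ iB; exists B.
apply/andP; split; last first.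
  apply/forallP=> a; apply/implyP=> /e_surj[i ->]; apply/existsP.
  case: (inQ i) => B BQ iB; exists (U B); rewrite imset_f //=.
  exact: bigcup_sup.
apply/and3P; split.
- apply/and3P; split.
  + apply/eqP/setP=> x; rewrite inE; case: (e_cover x) => i xi.
    case: (inQ i) => B BQ iB; apply/bigcupP; exists (U B); first exact: imset_f.
    by apply/bigcupP; exists i.
  + apply/trivIsetP=> _ _ /imsetP[B BQ ->] /imsetP[B' B'Q ->] ne.
    have neB : B != B' by apply: contra ne => /eqP ->.
    have dB := trivIsetP (partition_trivIset HQ) _ _ BQ B'Q neB.
    rewrite -setI_eq0; apply/eqP/setP=> x; rewrite in_setI in_set0.
    apply/negbTE/andP=> [[/bigcupP[i iB xi] /bigcupP[j jB xj]]].
    by move: (disjointFr dB iB); rewrite (e_disj xi xj) jB.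
  + apply/imsetP=> [[B BQ E]].
    have : B = set0.
      by rewrite -(VU B) -E; apply/setP=> i; rewrite !inE; case: (e_ne0 i) => x xi;
         apply/negbTE/negP=> /subsetP/(_ x xi); rewrite inE.
    by move=> B0; move: (part_nset0 HQ); rewrite -B0 BQ.
- apply/forallP=> X; apply/implyP=> /imsetP[B _ ->].
  by rewrite cardU odd_double.
- exact: perm_trans (halfU Q) Hs.
Qed.

Lemma count_partA nu :
  #|[set P : {set {set T}} | even_setpart_halftype nu P && coarse A P]| = Rbar lam nu.
Proof.
rewrite /Rbar -(card_imset _ (imset_inj U_inj)); apply: eq_card => P.
rewrite inE; apply/idP/imsetP.
- case/andP=> /and3P[HP _ Hh] /forallP Hc.
  have tP := partition_trivIset HP; have cP := cover_partition HP.
  have coarseE : forall i, exists2 B, B \in P & e i \subset B.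
    move=> i; move/implyP: (Hc (e i)) => /(_ (e_mem i))/existsP[B /andP[BP sB]].
    by exists B.
  have UV : forall C, C \in P -> U (V C) = C.
    move=> C CP; apply/eqP; rewrite eqEsubset; apply/andP; split.
      by apply/bigcupsP=> i; rewrite inE.
    apply/subsetP=> x xC; case: (e_cover x) => i xi.
    case: (coarseE i) => B BP sB.
    have xB : x \in B by apply: (subsetP sB).
    have BC : B = C by rewrite -(def_pblock tP BP xB) (def_pblock tP CP xC).
    by apply/bigcupP; exists i; rewrite // inE -BC.
  have PE : P = U @: (V @: P).
    by rewrite -imset_comp -[LHS]imset_id; apply: eq_in_imset => C CP /=; rewrite UV.
  exists (V @: P); last exact: PE.
  rewrite inE; apply/andP; split; last by move: Hh; rewrite {1}PE; apply: perm_trans; rewrite perm_sym halfU.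
  apply/and3P; split.
  + apply/eqP/setP=> i; rewrite inE; case: (coarseE i) => B BP sB.
    by apply/bigcupP; exists (V B); rewrite ?imset_f // inE.
  + apply/trivIsetP=> _ _ /imsetP[B BP ->] /imsetP[B' B'P ->] ne.
    have neB : B != B' by apply: contra ne => /eqP ->.
    have dB := trivIsetP tP _ _ BP B'P neB.
    rewrite -setI_eq0; apply/eqP/setP=> i; rewrite in_setI in_set0 !inE.
    apply/negbTE/andP=> [[sB sB']]; case: (e_ne0 i) => x xi.
    by move: (disjointFr dB (subsetP sB x xi)); rewrite (subsetP sB' x xi).
  + apply/imsetP=> [[B BP E]].
    have : B = set0.
      by rewrite -(UV B BP) -E; apply/setP=> x; rewrite inE; apply/negbTE/bigcupP=> [[i]]; rewrite inE.
    by move=> B0; move: (part_nset0 HP); rewrite -B0 BP.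
- case=> Q; rewrite inE => /andP[HQ Hs] ->; exact: fwd.
Qed.

End PartA.

Lemma count_coarse (T : finType) (A : {set {set T}}) (lam nu : seq nat) :
  partition A [set: T] -> (forall a, a \in A -> #|a| = (#|a| %/ 2).*2) ->
  perm_eq lam [seq #|a| %/ 2 | a : {set T} <- enum A] ->
  #|[set P : {set {set T}} | even_setpart_halftype nu P && coarse A P]| = Rbar lam nu.
Proof.
move=> HA Hev /(perm_iotaP 0)[Is HIs Elam].
set t := [seq #|a| %/ 2 | a : {set T} <- enum A] in HIs Elam.
have szt : size t = #|A| by rewrite size_map -cardE.
have szI : size Is = size lam by rewrite Elam size_map.
have uIs : uniq Is by rewrite (perm_uniq HIs) iota_uniq.
have Iltn : forall j, j \in Is -> j < #|A|.
  by move=> j; rewrite (perm_mem HIs) mem_iota szt.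
have nthI : forall i : 'I_(size lam), nth 0 Is i < #|A|.
  by move=> i; apply: Iltn; apply: mem_nth; rewrite szI.
pose e (i : 'I_(size lam)) := nth set0 (enum A) (nth 0 Is i).
have szA : size (enum A) = #|A| by rewrite -cardE.
apply: (@count_partA T A lam e HA).
- move=> i j /eqP; rewrite /e nth_uniq ?enum_uniq ?szA ?nthI // nth_uniq ?szI //.
  by move/eqP/ord_inj.
- by move=> i; rewrite -mem_enum; apply: mem_nth; rewrite szA.
- move=> a aA.
  have ja : index a (enum A) \in Is by rewrite (perm_mem HIs) mem_iota szt -szA index_mem mem_enum.
  have Hi : index (index a (enum A)) Is < size lam by rewrite -szI index_mem.
  exists (Ordinal Hi); rewrite /e /= nth_index // nth_index //.
  by rewrite mem_enum.
- have E : forall j, j < size lam -> nth 0 lam j = nth 0 t (nth 0 Is j).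
    by move=> j Hj; rewrite Elam (nth_map 0) // szI.
  move=> i; rewrite E // (nth_map set0) ?szA ?nthI //.
  by rewrite -Hev // -mem_enum mem_nth // szA.
Qed.

Lemma dbl_count (p : pred nat) s : count p (dbl s) = (count p s).*2.
Proof. by elim: s => //= x s IH; rewrite IH; case: (p x); rewrite /= ?doubleS. Qed.

Lemma geq_trans : transitive geq.
Proof. by move=> y x z /= H1 H2; apply: leq_trans H2 H1. Qed.
Lemma geq_anti : antisymmetric geq.
Proof. by move=> x y /andP[H1 H2]; apply/eqP; rewrite eqn_leq; apply/andP; split. Qed.
Lemma geq_total : total geq.
Proof. by move=> x y; rewrite /= orbC leq_total. Qed.

Section Assembly.
Variables (T : finType) (f h : {perm T}).
Hypotheses (Hf : is_pairing f) (Hh : is_pairing h).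

Definition lamOf := sort geq [seq wt a | a <- enum (atoms f h)].

Lemma count_stable nu :
  #|[set P : {set {set T}} | even_setpart_halftype nu P && stable_by f P && stable_by h P]|
  = Rbar lamOf nu.
Proof.
rewrite -(@count_coarse T (atoms f h) lamOf nu (partition_atoms Hf Hh)).
- apply: eq_card => P; rewrite !inE -andbA.
  case E : (even_setpart_halftype nu P) => //=.
  by rewrite stable_coarse //; case/and3P: E.
- by move=> a Ha; rewrite {1}(even_atoms Hf Hh Ha).
- by rewrite /lamOf perm_sort.
Qed.

Lemma class_lamOf : in_class (dbl lamOf) (f * h)%g.
Proof.
rewrite /in_class; apply/seq.permP=> p; rewrite count_cycle_type // dbl_count.
by rewrite /lamOf count_sort.
Qed.

Lemma lamOf_unique lam : sorted geq lam -> in_class (dbl lam) (f * h)%g -> lam = lamOf.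
Proof.
move=> Hs Hc; apply: (sorted_eq geq_trans geq_anti) => //.
  rewrite /lamOf. apply: (sort_sorted geq_total).
apply/seq.permP=> p; apply: double_inj; rewrite -!dbl_count.
move: class_lamOf; rewrite /in_class => H.
by rewrite -(seq.permP H) (seq.permP Hc).
Qed.

Lemma lamOf_is_partition n : #|T| = n.*2 -> is_partition n lamOf.
Proof.
move=> HT; apply/and3P; split.
- rewrite /lamOf; apply: (sort_sorted geq_total).
- rewrite /lamOf all_sort; apply/allP=> _ /mapP[a aA ->].
  by rewrite mem_enum in aA; exact: (wt_pos Hf Hh aA).
- rewrite /lamOf (perm_sumn (permEl (perm_sort geq _))); apply/eqP; apply: double_inj; rewrite -HT.
  rewrite -cardsT (card_partition (partition_atoms Hf Hh)) sumnE big_map big_enum /=.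
  rewrite -muln2 big_distrl /=; apply: eq_bigr => a Ha.
  by rewrite muln2 -(even_atoms Hf Hh Ha).
Qed.

End Assembly.

Lemma pairing_f1 n : is_pairing (f1 n).
Proof.
apply/forallP=> x; rewrite !permE; case: x => i /=; rewrite ?ord_predK ?ordSK eqxx //.
Qed.

Lemma pairing_f2 n : is_pairing (f2 n).
Proof. by apply/forallP=> x; rewrite !permE; case: x => i /=; rewrite eqxx. Qed.

Lemma card_ground n : #|ground n| = n.*2.
Proof. by rewrite card_sum card_ord addnn. Qed.

Lemma uniq_seqs k m : uniq (seqs_upto k m).
Proof.
elim: k => //= k IH; apply/andP; split.
  by apply/negP=> /allpairsP[[x s] [_ _ /=]].
apply: allpairs_uniq => //; first exact: iota_uniq.
by move=> [x s] [y t] _ _ /= [-> ->].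
Qed.

Lemma mem_seqs k m l : size l <= k -> all (fun x => 0 < x <= m) l -> l \in seqs_upto k m.
Proof.
elim: k l => [|k IH] [|x l] //=; rewrite ?inE ?eqxx //.
move=> Hs /andP[Hx Hl]; apply/orP; right.
by apply: allpairs_f; [rewrite mem_iota; lia | apply: IH].
Qed.

Lemma size_le_sumn l : all (fun x => 0 < x) l -> size l <= sumn l.
Proof. by elim: l => //= x l IH /andP[Hx Hl]; have := IH Hl; lia. Qed.

Lemma le_sumn l x : x \in l -> x <= sumn l.
Proof. by elim: l => //= y l IH; rewrite inE => /orP[/eqP ->|/IH]; lia. Qed.

Lemma part_mem n l : is_partition n l -> l \in partitions n.
Proof.
move=> H; rewrite mem_filter H /=; case/and3P: H => _ Hpos /eqP Hsum.
apply: mem_seqs; first by rewrite -Hsum size_le_sumn.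
apply/allP=> x xl; rewrite (allP Hpos x xl) /= -Hsum; exact: le_sumn.
Qed.

Lemma uniq_partitions n : uniq (partitions n).
Proof. exact/filter_uniq/uniq_seqs. Qed.

Lemma sum_bool (I : finType) (b : pred I) : \sum_(i : I) (b i : nat) = #|[set i | b i]|.
Proof. by rewrite -sum1_card [RHS]big_mkcond; apply: eq_bigr => i _; rewrite inE; case: (b i). Qed.

Lemma if_nat (b : bool) : (if b then 1 else 0) = b.
Proof. by case: b. Qed.

Theorem proposition1 (n : nat) (nu rho : seq nat) :
  1 <= n -> is_partition n nu -> is_partition n rho ->
  LP n nu rho =
  \sum_(lam <- partitions n) \sum_(mu <- partitions n)
     (Rbar lam nu * Rbar mu rho * L n lam mu)%N.
Proof.
move=> _ Hnu Hrho.
have HT : #|ground n| = n.*2 := card_ground n.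
have sel : forall (f h : {perm ground n}), is_pairing f -> is_pairing h ->
  forall F : seq nat -> nat,
  \sum_(lam <- partitions n) (in_class (dbl lam) (f * h)%g : nat) * F lam = F (lamOf f h).
  move=> f h Hf Hh F.
  rewrite (eq_big_seq (fun lam => if lam == lamOf f h then F lam else 0)); last first.
    move=> lam; rewrite mem_filter => /andP[Hp _].
    have -> : in_class (dbl lam) (f * h)%g = (lam == lamOf f h).
      apply/idP/eqP => [|->]; last exact: class_lamOf.
      by apply: lamOf_unique => //; case/and3P: Hp.
    by case: (lam == lamOf f h); rewrite ?mul1n ?mul0n.
  rewrite -big_mkcond -big_filter filter_pred1_uniq ?big_seq1 //.
    exact: uniq_partitions.
  exact/part_mem/lamOf_is_partition.
have LHS : LP n nu rho = \sum_(h : {perm ground n})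
    is_pairing h * (Rbar (lamOf (f1 n) h) nu * Rbar (lamOf (f2 n) h) rho).
  rewrite /LP -sum1_card [LHS]big_mkcond /=.
  transitivity (\sum_(h : {perm ground n}) \sum_(p1 : {set {set ground n}})
     \sum_(p2 : {set {set ground n}}) ([&& is_pairing h,
          even_setpart_halftype nu p1, even_setpart_halftype rho p2,
          stable_by (f1 n) p1, stable_by h p1,
          stable_by (f2 n) p2 & stable_by h p2] : nat)).
    rewrite pair_bigA pair_bigA; apply: eq_bigr => [[[h p1] p2]] _ /=.
    by rewrite inE if_nat.
  apply: eq_bigr => h _.
  case Hh : (is_pairing h); last by rewrite big1 // => p1 _; rewrite big1.
  rewrite -(count_stable (pairing_f1 n) Hh nu) -(count_stable (pairing_f2 n) Hh rho) -!sum_bool.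
  rewrite mul1n big_distrl; apply: eq_bigr => p1 _; rewrite big_distrr; apply: eq_bigr => p2 _ /=.
  case: (even_setpart_halftype nu p1); case: (even_setpart_halftype rho p2);
  case: (stable_by (f1 n) p1); case: (stable_by h p1);
  by case: (stable_by (f2 n) p2); case: (stable_by h p2).
rewrite LHS /L.
under eq_bigr => lam _ do under eq_bigr => mu _ do rewrite -sum_bool big_distrr.
under eq_bigr => lam _ do rewrite exchange_big.
rewrite exchange_big; apply: eq_bigr => h _.
case Hh : (is_pairing h) => /=; last first.
  by rewrite mul0n big1 // => lam _; rewrite big1 // => mu _; rewrite muln0.
rewrite mul1n -(sel _ _ (pairing_f1 n) Hh (fun lam => Rbar lam nu)).
rewrite -(sel _ _ (pairing_f2 n) Hh (fun mu => Rbar mu rho)).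
rewrite big_distrl; apply: eq_bigr => lam _; rewrite big_distrr; apply: eq_bigr => mu _ /=.
by case: (in_class _ (f1 n * h)%g); case: (in_class _ (f2 n * h)%g); rewrite /= ?mul0n ?muln0 ?mul1n ?muln1 ?addn0.
Qed.
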